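(* Let $F$ be WORDER or WMAJORITY with weights $w_1\ge\dots\ge w_n>0$, and run SMO-GP-single on MO-$F$ starting from a non-redundant initial tree. Then at every iteration every tree in the population is non-redundant, and the population has at most $n+1$ elements.
   Context: Fix an integer $n\ge 1$ and real weights $w_1\ge w_2\ge\dots\ge w_n>0$. The terminal set is $T=\{x_1,\bar x_1,\dots,x_n,\bar x_n\}$ ($\bar x_i$ is the complement of $x_i$; $x_i$ is called positive). A syntax tree is either the empty tree or a rooted ordered binary tree whose inner nodes are all labelled by the binary function $J$ (join, exactly two ordered children) and whose leaves are labelled by elements of $T$. The complexity $C(X)$ is the number of nodes of $X$ (0 for the empty tree). The leaf list $l$ of $X$ is the sequence of leaf labels in an inorder traversal. WORDER: build a list $S$ by scanning $l$ from front to rear and appending a literal only if neither it nor its complement is already in $S$; WORDER$(X)=\sum_{i:\,x_i\in S} w_i$; the expressed variables are the $x_i\in S$. WMAJORITY: WMAJORITY$(X)=\sum w_i$ over all $i$ such that $x_i$ occurs in $l$ at least once and at least as often as $\bar x_i$; these $x_i$ are the expressed variables. A tree is non-redundant if it is empty or if, with $k$ its number of expressed variables, its complexity is $2k-1$. MO-$F(X)=(F(X),C(X))$, $F$ maximized and $C$ minimized. Mutation (one HVL-Prime application): choose uniformly at random one of three operations. Substitute: replace a uniformly random leaf by a uniformly random $u\in T$. Insert: choose a uniformly random node $v$ and uniformly random $u\in T$, replace $v$ by a $J$-node with children $u$ and $v$ in uniformly random order (inserting into the empty tree yields the single leaf $u$). Delete: choose a uniformly random leaf $v$ with parent $p$ and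 sibling $u$, replace $p$ by $u$ (deleting $p$ and $v$; deleting the only leaf of a one-leaf tree yields the empty tree). Dominance: $Y\succeq X$ iff $F(Y)\ge F(X)$ and $C(Y)\le C(X)$; $Y\succ X$ iff $Y\succeq X$ and ($F(Y)>F(X)$ or $C(Y)<C(X)$). SMO-GP-single: choose an initial tree $X$ and set $P:=\{X\}$; repeat: choose $X\in P$ uniformly at random, let $Y$ be $X$ after one HVL-Prime application; if no $Z\in P$ satisfies $Z\succ Y$, set $P:=(P\setminus\{Z\in P: Y\succeq Z\})\cup\{Y\}$. *)

(* Defs.v *)
From Stdlib Require Import Bool Reals List Arith Relations.
Import ListNotations.
Open Scope R_scope.

(* Variables are indexed 0 .. n-1 (paper: 1 .. n).
   A literal is (i, true) = x_i (positive) or (i, false) = complement of x_i. *)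
Definition lit : Type := (nat * bool)%type.
Definition compl (a : lit) : lit := (fst a, negb (snd a)).
Definition lit_eqb (a b : lit) : bool :=
  Nat.eqb (fst a) (fst b) && Bool.eqb (snd a) (snd b).
(* a belongs to the terminal set T = {x_1, bar x_1, ..., x_n, bar x_n} *)
Definition in_T (n : nat) (a : lit) : Prop := (fst a < n)%nat.

Inductive tree : Type :=
| Leaf : lit -> tree
| J : tree -> tree -> tree.

Definition stree : Type := option tree.

Fixpoint leaves (t : tree) : list lit :=
  match t with Leaf a => [a] | J l r => leaves l ++ leaves r end.
Definition leaf_list (X : stree) : list lit :=
  match X with None => [] | Some t => leaves t end.

Fixpoint nodes (t : tree) : nat :=
  match t with Leaf _ => 1 | J l r => S (nodes l + nodes r) end.
Definition C (X : stree) : nat :=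
  match X with None => 0 | Some t => nodes t end.

Definition valid (n : nat) (X : stree) : Prop :=
  forall a, In a (leaf_list X) -> in_T n a.

Inductive fitness_kind : Type := WORDER | WMAJORITY.

Definition worder_S (l : list lit) : list lit :=
  fold_left (fun S a =>
               if existsb (fun b => lit_eqb b a || lit_eqb b (compl a)) S
               then S else S ++ [a]) l [].

Definition occ (a : lit) (l : list lit) : nat := length (filter (lit_eqb a) l).

Definition expressed (k : fitness_kind) (X : stree) (i : nat) : bool :=
  match k with
  | WORDER => existsb (lit_eqb (i, true)) (worder_S (leaf_list X))
  | WMAJORITY =>
      let l := leaf_list X in
      Nat.leb 1 (occ (i, true) l) && Nat.leb (occ (i, false) l) (occ (i, true) l)
  end.

Definition F (k : fitness_kind) (n : nat) (w : nat -> R) (X : stree) : R :=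
  fold_right Rplus 0
    (map (fun i => if expressed k X i then w i else 0) (seq 0 n)).

Definition num_expressed (k : fitness_kind) (n : nat) (X : stree) : nat :=
  length (filter (expressed k X) (seq 0 n)).

(* non-redundant: empty, or complexity = 2k - 1 (written C + 1 = 2k) *)
Definition non_redundant (k : fitness_kind) (n : nat) (X : stree) : Prop :=
  X = None \/ (C X + 1 = 2 * num_expressed k n X)%nat.

Inductive subst_rel (n : nat) : tree -> tree -> Prop :=
| sub_leaf : forall a u, in_T n u -> subst_rel n (Leaf a) (Leaf u)
| sub_l : forall l l' r, subst_rel n l l' -> subst_rel n (J l r) (J l' r)
| sub_r : forall l r r', subst_rel n r r' -> subst_rel n (J l r) (J l r').

Inductive insert_rel (n : nat) : tree -> tree -> Prop :=
| ins_here_l : forall u v, in_T n u -> insert_rel n v (J (Leaf u) v)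
| ins_here_r : forall u v, in_T n u -> insert_rel n v (J v (Leaf u))
| ins_l : forall l l' r, insert_rel n l l' -> insert_rel n (J l r) (J l' r)
| ins_r : forall l r r', insert_rel n r r' -> insert_rel n (J l r) (J l r').

Inductive delete_rel : tree -> tree -> Prop :=
| del_here_l : forall a u, delete_rel (J (Leaf a) u) u
| del_here_r : forall a u, delete_rel (J u (Leaf a)) u
| del_l : forall l l' r, delete_rel l l' -> delete_rel (J l r) (J l' r)
| del_r : forall l r r', delete_rel r r' -> delete_rel (J l r) (J l r').

(* Y is a possible result (positive probability) of one HVL-Prime application to X. *)
Inductive mutate (n : nat) : stree -> stree -> Prop :=
| mut_subst : forall t t', subst_rel n t t' -> mutate n (Some t) (Some t')
| mut_insert : forall t t', insert_rel n t t' -> mutate n (Some t) (Some t')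
| mut_insert_empty : forall u, in_T n u -> mutate n None (Some (Leaf u))
| mut_delete : forall t t', delete_rel t t' -> mutate n (Some t) (Some t')
| mut_delete_single : forall a, mutate n (Some (Leaf a)) None
(* substitute / delete on the empty tree (no leaf to choose): no change *)
| mut_empty_noop : mutate n None None.

Definition wdom (k : fitness_kind) (n : nat) (w : nat -> R) (Y X : stree) : Prop :=
  F k n w Y >= F k n w X /\ (C Y <= C X)%nat.
Definition sdom (k : fitness_kind) (n : nat) (w : nat -> R) (Y X : stree) : Prop :=
  wdom k n w Y X /\ (F k n w Y > F k n w X \/ (C Y < C X)%nat).
Definition wdomb (k : fitness_kind) (n : nat) (w : nat -> R) (Y X : stree) : bool :=
  if Rge_dec (F k n w Y) (F k n w X) then Nat.leb (C Y) (C X) else false.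

Definition smo_step (k : fitness_kind) (n : nat) (w : nat -> R)
  (P P' : list stree) : Prop :=
  exists X Y, In X P /\ mutate n X Y /\
    ( ((~ exists Z, In Z P /\ sdom k n w Z Y) /\
        P' = Y :: filter (fun Z => negb (wdomb k n w Y Z)) P)
   \/ ((exists Z, In Z P /\ sdom k n w Z Y) /\ P' = P) ).

Definition reachable (k : fitness_kind) (n : nat) (w : nat -> R)
  (X0 : stree) (P : list stree) : Prop :=
  clos_refl_trans (list stree) (smo_step k n w) [X0] P.

(* Main.v *)
Require Import Defs.
From Stdlib Require Import Reals List Arith Relations Lia Lra Permutation Bool.
Import ListNotations.
Open Scope R_scope.

Lemma lit_eqb_eq a b : lit_eqb a b = true <-> a = b.
Proof.
  destruct a as [x y], b as [x' y']; unfold lit_eqb; simpl.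
  rewrite andb_true_iff, Nat.eqb_eq, eqb_true_iff.
  split; [intros [-> ->]; reflexivity | intros H; inversion H; auto].
Qed.

Lemma nodes_leaves t : (nodes t + 1 = 2 * length (leaves t))%nat.
Proof. induction t; simpl; [reflexivity| rewrite length_app; lia]. Qed.

Lemma C_len X : Defs.C X = (2 * length (leaf_list X) - 1)%nat.
Proof. destruct X; simpl; [pose proof (nodes_leaves t); lia | reflexivity]. Qed.

Definition exprL (k : fitness_kind) (l : list lit) (i : nat) : bool :=
  match k with
  | WORDER => existsb (lit_eqb (i, true)) (worder_S l)
  | WMAJORITY => Nat.leb 1 (occ (i, true) l) && Nat.leb (occ (i, false) l) (occ (i, true) l)
  end.

Lemma expr_L k X i : expressed k X i = exprL k (leaf_list X) i.
Proof. destruct k; reflexivity. Qed.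

Definition FL k n w l := fold_right Rplus 0
  (map (fun i => if exprL k l i then w i else 0) (seq 0 n)).

Lemma F_L k n w X : F k n w X = FL k n w (leaf_list X).
Proof. unfold F, FL. reflexivity. Qed.

Lemma ne_L k n X : num_expressed k n X = length (filter (exprL k (leaf_list X)) (seq 0 n)).
Proof. unfold num_expressed; f_equal; apply filter_ext; intro; apply expr_L. Qed.

Definition wstep := (fun S a =>
   if existsb (fun b => lit_eqb b a || lit_eqb b (compl a)) S
   then S else S ++ [a]).

Lemma worder_S_eq l : worder_S l = fold_left wstep l [].
Proof. reflexivity. Qed.

Lemma worder_fold_incl l S x : In x (fold_left wstep l S) -> In x S \/ In x l.
Proof.
  revert S; induction l as [|a l IH]; intros S H; simpl in *.
  - auto.
  - unfold wstep at 2 in H. destruct (existsb (fun b => lit_eqb b a || lit_eqb b (compl a)) S) eqn:E.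
    + destruct (IH S H); auto.
    + destruct (IH _ H) as [H1|H1]; [apply in_app_or in H1; destruct H1 as [H1|[H1|[]]]; auto | auto].
Qed.

Lemma worder_clean l S : NoDup (map fst (S ++ l)) -> fold_left wstep l S = S ++ l.
Proof.
  revert S; induction l as [|a l IH]; intros S H; simpl.
  - rewrite app_nil_r; auto.
  - unfold wstep at 2. destruct (existsb (fun b => lit_eqb b a || lit_eqb b (compl a)) S) eqn:E.
    + exfalso. apply existsb_exists in E as (b & Hb & Hb2).
      rewrite map_app in H; simpl in H. apply NoDup_remove_2 in H.
      apply H. apply in_or_app. left. apply in_map_iff. exists b. split; auto.
      apply orb_true_iff in Hb2 as [Hb2|Hb2]; apply lit_eqb_eq in Hb2; subst; reflexivity.
    + rewrite IH. rewrite <- app_assoc. reflexivity.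
      rewrite <- app_assoc. exact H.
Qed.

Lemma expr_in k l i : exprL k l i = true -> In (i, true) l.
Proof.
  destruct k; simpl; intro H.
  - apply existsb_exists in H as (x & Hx & Hx2). apply lit_eqb_eq in Hx2; subst.
    rewrite worder_S_eq in Hx. destruct (worder_fold_incl _ _ _ Hx) as [[]|]; auto.
  - apply andb_true_iff in H as [H _]. unfold occ in H.
    destruct (filter (lit_eqb (i, true)) l) as [|x r] eqn:E; simpl in H; [discriminate|].
    assert (Hx : In x (filter (lit_eqb (i, true)) l)) by (rewrite E; left; auto).
    apply filter_In in Hx as [Hx Hx2]. apply lit_eqb_eq in Hx2; subst; auto.
Qed.

Definition cleanL n (l : list lit) :=
  NoDup (map fst l) /\ forall a, In a l -> snd a = true /\ (fst a < n)%nat.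

Lemma clean_expr k n l i : cleanL n l -> In (i, true) l -> exprL k l i = true.
Proof.
  intros [Hnd Hall] Hi. destruct k; simpl.
  - rewrite worder_S_eq, worder_clean by exact Hnd. simpl.
    apply existsb_exists. exists (i, true). split; auto. apply lit_eqb_eq; auto.
  - unfold occ.
    assert (E0 : filter (lit_eqb (i, false)) l = []).
    { destruct (filter (lit_eqb (i, false)) l) as [|x r] eqn:E; auto.
      assert (Hx : In x (filter (lit_eqb (i, false)) l)) by (rewrite E; left; auto).
      apply filter_In in Hx as [Hx Hx2]. apply lit_eqb_eq in Hx2; subst.
      destruct (Hall _ Hx) as [Hs _]; discriminate. }
    rewrite E0. simpl.
    destruct (filter (lit_eqb (i, true)) l) as [|x r] eqn:E.
    + exfalso. assert (Hx : In (i,true) (filter (lit_eqb (i, true)) l)).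
      { apply filter_In; split; auto. apply lit_eqb_eq; auto. }
      rewrite E in Hx; destruct Hx.
    + reflexivity.
Qed.

Lemma sum_le (e e' : nat -> bool) (w : nat -> R) s :
  (forall i, In i s -> w i > 0) -> (forall i, In i s -> e' i = true -> e i = true) ->
  fold_right Rplus 0 (map (fun i => if e' i then w i else 0) s)
  <= fold_right Rplus 0 (map (fun i => if e i then w i else 0) s).
Proof.
  induction s as [|a s IH]; simpl; intros H H0; [lra|].
  assert (IH' := IH (fun i Hi => H i (or_intror Hi)) (fun i Hi => H0 i (or_intror Hi))).
  pose proof (H a (or_introl eq_refl)) as Ha.
  destruct (e' a) eqn:E1; [rewrite (H0 a (or_introl eq_refl) E1); lra|].
  destruct (e a); lra.
Qed.

Lemma sum_lt (e e' : nat -> bool) (w : nat -> R) s j :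
  (forall i, In i s -> w i > 0) -> (forall i, In i s -> e' i = true -> e i = true) ->
  In j s -> e j = true -> e' j = false ->
  fold_right Rplus 0 (map (fun i => if e' i then w i else 0) s)
  < fold_right Rplus 0 (map (fun i => if e i then w i else 0) s).
Proof.
  induction s as [|a s IH]; simpl; intros H H0 Hj Hej Hej'; [destruct Hj|].
  pose proof (H a (or_introl eq_refl)) as Ha.
  destruct Hj as [<-|Hj].
  - rewrite Hej, Hej'.
    pose proof (sum_le e e' w s (fun i Hi => H i (or_intror Hi)) (fun i Hi => H0 i (or_intror Hi))).
    lra.
  - assert (IH' := IH (fun i Hi => H i (or_intror Hi)) (fun i Hi => H0 i (or_intror Hi)) Hj Hej Hej').
    destruct (e' a) eqn:E1; [rewrite (H0 a (or_introl eq_refl) E1); lra|].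
    destruct (e a); lra.
Qed.

Lemma subst_leaves n t t' : subst_rel n t t' ->
  exists l1 l2 a u, leaves t = l1 ++ a :: l2 /\ leaves t' = l1 ++ u :: l2 /\ in_T n u.
Proof.
  induction 1.
  - exists [], [], a, u; simpl; auto.
  - destruct IHsubst_rel as (l1&l2&a&u&E1&E2&Hu).
    exists l1, (l2 ++ leaves r), a, u. simpl. rewrite E1, E2, <- !app_assoc. simpl. auto.
  - destruct IHsubst_rel as (l1&l2&a&u&E1&E2&Hu).
    exists (leaves l ++ l1), l2, a, u. simpl. rewrite E1, E2, !app_assoc. auto.
Qed.

Lemma insert_leaves n t t' : insert_rel n t t' ->
  exists l1 l2 u, leaves t = l1 ++ l2 /\ leaves t' = l1 ++ u :: l2 /\ in_T n u.
Proof.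
  induction 1.
  - exists [], (leaves v), u; simpl; auto.
  - exists (leaves v), [], u; simpl; rewrite app_nil_r; auto.
  - destruct IHinsert_rel as (l1&l2&u&E1&E2&Hu).
    exists l1, (l2 ++ leaves r), u. simpl. rewrite E1, E2, <- !app_assoc. simpl. auto.
  - destruct IHinsert_rel as (l1&l2&u&E1&E2&Hu).
    exists (leaves l ++ l1), l2, u. simpl. rewrite E1, E2, !app_assoc. auto.
Qed.

Lemma delete_leaves t t' : delete_rel t t' ->
  exists l1 l2 a, leaves t = l1 ++ a :: l2 /\ leaves t' = l1 ++ l2.
Proof.
  induction 1.
  - exists [], (leaves u), a; simpl; auto.
  - exists (leaves u), [], a; simpl; rewrite app_nil_r; auto.
  - destruct IHdelete_rel as (l1&l2&a&E1&E2).
    exists l1, (l2 ++ leaves r), a. simpl. rewrite E1, E2, <- !app_assoc. simpl. auto.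
  - destruct IHdelete_rel as (l1&l2&a&E1&E2).
    exists (leaves l ++ l1), l2, a. simpl. rewrite E1, E2, !app_assoc. auto.
Qed.

Lemma nodup_mid {A} (l1 l2 : list A) x :
  NoDup (l1 ++ x :: l2) <-> ~ In x (l1 ++ l2) /\ NoDup (l1 ++ l2).
Proof.
  split.
  - intro H; split; [apply NoDup_remove_2 in H | apply NoDup_remove_1 in H]; auto.
  - intros [H1 H2]. eapply Permutation_NoDup; [apply Permutation_middle|].
    constructor; auto.
Qed.

Lemma in_mid {A} (l1 l2 : list A) x y :
  In y (l1 ++ x :: l2) <-> x = y \/ In y (l1 ++ l2).
Proof.
  rewrite !in_app_iff; simpl; tauto.
Qed.

Lemma map_mid {A B} (f : A -> B) l1 l2 x :
  map f (l1 ++ x :: l2) = map f l1 ++ f x :: map f l2.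
Proof. rewrite map_app; reflexivity. Qed.

Lemma pos_in n L i : (forall a, In a L -> snd a = true /\ (fst a < n)%nat) ->
  In i (map fst L) -> In (i, true) L.
Proof.
  intros Hall H. apply in_map_iff in H as ([x y] & Hx & Hin). simpl in Hx; subst.
  destruct (Hall _ Hin) as [Hs _]. simpl in Hs; subst; auto.
Qed.

Lemma del_case n l1 l2 a : cleanL n (l1 ++ a :: l2) -> cleanL n (l1 ++ l2).
Proof.
  intros [Hnd Hall]. rewrite map_mid, nodup_mid in Hnd. split.
  - rewrite map_app; tauto.
  - intros b Hb; apply Hall; apply in_mid; auto.
Qed.

Lemma clean_ins n l1 l2 u : cleanL n (l1 ++ l2) -> in_T n u -> snd u = true ->
  ~ In (fst u) (map fst (l1 ++ l2)) -> cleanL n (l1 ++ u :: l2).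
Proof.
  intros [Hnd Hall] Hu Su Hn. split.
  - rewrite map_mid, nodup_mid, <- map_app. auto.
  - intros b Hb. apply in_mid in Hb as [<-|Hb]; auto.
Qed.

Lemma seq_pos n w : (forall i, (i < n)%nat -> w i > 0) -> forall i, In i (seq 0 n) -> w i > 0.
Proof. intros H i Hi; apply in_seq in Hi; apply H; lia. Qed.

Lemma ins_case k n w l1 l2 u : (forall i, (i < n)%nat -> w i > 0) ->
  cleanL n (l1 ++ l2) -> in_T n u ->
  cleanL n (l1 ++ u :: l2) \/ FL k n w (l1 ++ u :: l2) <= FL k n w (l1 ++ l2).
Proof.
  intros Hw Hc Hu.
  destruct (snd u) eqn:Su; [destruct (in_dec Nat.eq_dec (fst u) (map fst (l1 ++ l2))) as [Hin|Hnin]|].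
  2: left; apply clean_ins; auto.
  all: right; unfold FL; apply sum_le; [apply seq_pos; auto|].
  all: intros i _ He; apply (clean_expr k n); auto; apply expr_in, in_mid in He as [He|He]; auto.
  - subst u. apply (pos_in n); [apply Hc|]. exact Hin.
  - subst u; discriminate.
Qed.

Lemma sub_case k n w l1 l2 a u : (forall i, (i < n)%nat -> w i > 0) ->
  cleanL n (l1 ++ a :: l2) -> in_T n u ->
  cleanL n (l1 ++ u :: l2) \/ FL k n w (l1 ++ u :: l2) < FL k n w (l1 ++ a :: l2).
Proof.
  intros Hw Hc Hu.
  pose proof (del_case _ _ _ _ Hc) as Hc'.
  destruct Hc as [Hnd Hall]. pose proof Hnd as Hnd'.
  rewrite map_mid, nodup_mid, <- map_app in Hnd'. destruct Hnd' as [Hna _].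
  destruct (Hall a (proj2 (in_mid _ _ _ _) (or_introl eq_refl))) as [Sa Ha].
  assert (Ea : a = (fst a, true)) by (destruct a; simpl in *; subst; auto).
  destruct (lit_eqb u a) eqn:E.
  { apply lit_eqb_eq in E; subst; left; split; auto. }
  assert (Hne : u <> a) by (intro; subst; rewrite (proj2 (lit_eqb_eq a a) eq_refl) in E; discriminate).
  assert (Himp : (snd u = true -> In (fst u) (map fst (l1 ++ l2))) ->
     forall i, In i (seq 0 n) -> exprL k (l1 ++ u :: l2) i = true -> exprL k (l1 ++ a :: l2) i = true).
  { intros Hcase i _ He. apply (clean_expr k n); [split; auto|]. apply in_mid; right.
    apply expr_in, in_mid in He as [He|He]; auto. subst u.
    apply (pos_in n); [apply Hc'|]. apply Hcase; auto. }
  assert (Hja : exprL k (l1 ++ a :: l2) (fst a) = true).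
  { apply (clean_expr k n); [split; auto|]. apply in_mid; left; exact Ea. }
  assert (Hja' : exprL k (l1 ++ u :: l2) (fst a) = false).
  { destruct (exprL k (l1 ++ u :: l2) (fst a)) eqn:Ex; auto.
    apply expr_in, in_mid in Ex as [Ex|Ex].
    - exfalso; apply Hne; rewrite Ea; auto.
    - exfalso; apply Hna; apply in_map_iff; exists (fst a, true); auto. }
  destruct (snd u) eqn:Su; [destruct (in_dec Nat.eq_dec (fst u) (map fst (l1 ++ l2))) as [Hin|Hnin]|].
  2: left; apply clean_ins; auto.
  all: right; unfold FL; apply sum_lt with (j := fst a);
    [apply seq_pos; auto | apply Himp | apply in_seq; lia | exact Hja | exact Hja'].
  - intros; auto.
  - intro H; try rewrite Su in H; discriminate.
Qed.

Lemma step_ok k n w X Y : (forall i, (i < n)%nat -> w i > 0) ->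
  cleanL n (leaf_list X) -> mutate n X Y -> cleanL n (leaf_list Y) \/ sdom k n w X Y.
Proof.
  intros Hw Hc HM. unfold sdom, wdom. rewrite !F_L, !C_len.
  destruct HM; simpl in *.
  - apply subst_leaves in H as (l1&l2&a&u&E1&E2&Hu). rewrite E1 in *; rewrite E2.
    destruct (sub_case k n w l1 l2 a u Hw Hc Hu) as [H|H]; [left; auto|right].
    rewrite !length_app; simpl. split; [split; [lra|lia]|left; lra].
  - apply insert_leaves in H as (l1&l2&u&E1&E2&Hu). rewrite E1 in *; rewrite E2.
    destruct (ins_case k n w l1 l2 u Hw Hc Hu) as [H|H]; [left; auto|right].
    rewrite !length_app; simpl. split; [split; [lra|lia]|right; lia].
  - destruct (ins_case k n w [] [] u Hw Hc H) as [H0|H0]; [left; auto|right].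
    simpl in H0. split; [split; [lra|simpl; lia]|right; simpl; lia].
  - apply delete_leaves in H as (l1&l2&a&E1&E2). rewrite E1 in *; rewrite E2.
    left; eapply del_case; eauto.
  - left; split; [constructor|intros b []].
  - left; auto.
Qed.

Lemma ne_clean k n X : cleanL n (leaf_list X) -> num_expressed k n X = length (leaf_list X).
Proof.
  intros Hc. rewrite ne_L. set (l := leaf_list X) in *.
  assert (H1 : (length (filter (exprL k l) (seq 0 n)) <= length (map fst l))%nat).
  { apply NoDup_incl_length.
    + apply NoDup_filter, seq_NoDup.
    + intros i Hi. apply filter_In in Hi as [_ Hi]. apply expr_in in Hi.
      apply in_map_iff. exists (i, true); auto. }
  assert (H2 : (length (map fst l) <= length (filter (exprL k l) (seq 0 n)))%nat).
  { apply NoDup_incl_length; [apply Hc|].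
    intros i Hi. apply (pos_in n) in Hi; [|apply Hc]. apply filter_In. split.
    + apply in_seq. destruct Hc as [_ Hall]. destruct (Hall _ Hi) as [_ Hlt]; simpl in Hlt; lia.
    + apply (clean_expr k n); auto. }
  rewrite length_map in H1, H2. change (@length lit l) with (@length (nat * bool) l). lia.
Qed.

Lemma clean_nonred k n X : cleanL n (leaf_list X) -> non_redundant k n X.
Proof.
  intros Hc. destruct X as [t|]; [right|left; auto].
  rewrite ne_clean by exact Hc. simpl. apply nodes_leaves.
Qed.

Lemma nonred_clean k n X : valid n X -> non_redundant k n X -> cleanL n (leaf_list X).
Proof.
  intros Hv [->|Hn]; [split; [constructor|intros b []]|].
  destruct X as [t|]; [|split; [constructor|intros b []]].
  simpl in Hn. pose proof (nodes_leaves t) as Hl.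
  rewrite ne_L in Hn. simpl in *. set (l := leaves t) in *.
  set (q := filter snd l).
  assert (H1 : (length (filter (exprL k l) (seq 0 n)) <= length (map fst q))%nat).
  { apply NoDup_incl_length; [apply NoDup_filter, seq_NoDup|].
    intros i Hi. apply filter_In in Hi as [_ Hi]. apply expr_in in Hi.
    apply in_map_iff. exists (i, true). split; auto. apply filter_In; auto. }
  rewrite length_map in H1.
  pose proof (filter_length_le snd l) as H2.
  assert (Hq : length q = length l) by (unfold q in *; unfold lit in *; lia).
  apply filter_length_forallb in Hq. rewrite forallb_forall in Hq.
  split.
  - apply NoDup_incl_NoDup with (l := filter (exprL k l) (seq 0 n)).
    + apply NoDup_filter, seq_NoDup.
    + rewrite length_map. unfold lit in *; lia.
    + intros i Hi. apply filter_In in Hi as [_ Hi]. apply expr_in in Hi.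
      apply in_map_iff. exists (i, true); auto.
  - intros a Ha. split; [apply Hq; auto| apply Hv; auto].
Qed.

Lemma nodup_map_filter {A B} (f : A -> B) g l : NoDup (map f l) -> NoDup (map f (filter g l)).
Proof.
  induction l as [|a l IH]; simpl; intros H; auto. inversion H; subst.
  destruct (g a); simpl; auto. constructor; auto.
  intro Hin; apply H2. apply in_map_iff in Hin as (x&Hx&Hin). apply filter_In in Hin.
  apply in_map_iff; exists x; tauto.
Qed.

Definition Inv k n (P : list stree) :=
  (forall Z, In Z P -> cleanL n (leaf_list Z)) /\ NoDup (map (num_expressed k n) P).

Lemma step_inv k n w P P' : (forall i, (i < n)%nat -> w i > 0) ->
  Inv k n P -> smo_step k n w P P' -> Inv k n P'.
Proof.
  intros Hw [Hcl Hnd0] (X&Y&HX&HM&[[Hnd HP']|[_ HP']]); subst; [|split; auto].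
  destruct (step_ok k n w X Y Hw (Hcl X HX) HM) as [Hc|Hs];
    [|exfalso; apply Hnd; exists X; auto].
  split.
  - intros Z [<-|HZ]; [exact Hc|]. apply filter_In in HZ; apply Hcl; tauto.
  - simpl; constructor; [|apply nodup_map_filter; auto].
    intro Hin. apply in_map_iff in Hin as (Z&HeZ&HZ). apply filter_In in HZ as [HZP Hb].
    assert (CZ : Defs.C Z = Defs.C Y).
    { rewrite !C_len. rewrite <- !(ne_clean k n) by auto. rewrite HeZ; reflexivity. }
    unfold wdomb in Hb. destruct (Rge_dec (F k n w Y) (F k n w Z)) as [Hge|Hlt].
    + rewrite CZ, Nat.leb_refl in Hb; discriminate.
    + apply Hnd. exists Z. split; auto. unfold sdom, wdom. apply Rnot_ge_lt in Hlt.
      split; [split; [lra|lia]| left; lra].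
Qed.

Lemma reach_inv k n w x y : (forall i, (i < n)%nat -> w i > 0) ->
  clos_refl_trans (list stree) (smo_step k n w) x y -> Inv k n x -> Inv k n y.
Proof.
  intros Hw H; induction H; auto. intro; eapply step_inv; eauto.
Qed.

Theorem mainTheorem10 (k : fitness_kind) (n : nat) (w : nat -> R)
  (Hn : (1 <= n)%nat)
  (Hmono : forall i, (S i < n)%nat -> w i >= w (S i))
  (Hpos : forall i, (i < n)%nat -> w i > 0)
  (X0 : stree) (HX0 : valid n X0) (HX0nr : non_redundant k n X0) :
  forall P, reachable k n w X0 P ->
    (forall Z, In Z P -> non_redundant k n Z) /\ (length P <= n + 1)%nat.
Proof.
  intros P HP.
  assert (HI : Inv k n P).
  { apply (reach_inv k n w [X0]); auto. split.
    - intros Z [<-|[]]. apply (nonred_clean k); auto.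
    - constructor; [intros []|constructor]. }
  destruct HI as [Hc Hnd]. split.
  - intros Z HZ; apply clean_nonred; auto.
  - rewrite <- (length_map (num_expressed k n) P).
    rewrite <- (length_seq (n + 1) 0). apply NoDup_incl_length; auto.
    intros m Hm. apply in_map_iff in Hm as (Z&<-&_). apply in_seq.
    unfold num_expressed. pose proof (filter_length_le (expressed k Z) (seq 0 n)).
    rewrite length_seq in H. lia.
Qed.
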